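(* Let $\mathcal{L}\subset\mathcal{L}_*$ be lineages with hierarchical generators $\mathcal{H},\mathcal{H}_*$. Then (i) for every $\varphi\in\mathcal{H}_*$ there exists $k\ge\mathrm{gap}_{\mathcal{H}_*}(\varphi)$ with $\mathcal{O}(\varphi,-k,\mathcal{H})\neq\emptyset$; (ii) for every $\varphi\in\mathcal{H}_*\cap\mathcal{H}$, $\mathrm{gap}_{\mathcal{H}_*}(\varphi)\le\mathrm{gap}_{\mathcal{H}}(\varphi)$.
   Context: Fix integers $d\ge1$, $n\ge2$, $m\ge2$; $s=n-1$, $p=m-1$. B-splines $\varphi^\ell_{\vec i}(\vec x)=\prod_kQ(n^\ell x_k-i_k)$ for $\ell\ge0$, $\vec i\in\mathbb{Z}^d$, $Q$ the uniform B-spline of order $m$ with knots $0,\dots,m$; $\mathfrak{B}$ the set of all of them; $\mathcal{B}^0=\{\varphi^0_{\vec i}:\vec i\in[-p:0]^d\}$. Children $\mathrm{ch}(\varphi^\ell_{\vec i})=\{\varphi^{\ell+1}_{\vec k}:n\vec i\le\vec k\le n\vec i+sm\}$, extended to sets by union. Cells $I^\ell_{\vec i}=\prod_k[i_kn^{-\ell},(i_k+1)n^{-\ell})$, cell children $\mathrm{ch}(I^\ell_{\vec i})=\{I^{\ell+1}_{\vec k}:n\vec i\le\vec k\le n\vec i+s\}$, $\mathrm{ch}^k$ iterated, $\mathrm{ch}^{-k}(I)=\{J:I\in\mathrm{ch}^k(J)\}$. $\mathbb{I}(\varphi^\ell_{\vec i})=\{I^\ell_{\vec k}:\vec i\le\vec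 k\le\vec i+p\}$, $\mathbb{I}^k(\varphi)=\mathrm{ch}^k(\mathbb{I}(\varphi))$ ($k\in\mathbb{Z}$), $\mathbb{B}^k(I)=\{\varphi\in\mathfrak{B}:I\in\mathbb{I}^{-k}(\varphi)\}$, extended to sets by union; $\mathcal{O}(\varphi,j,\mathcal{H})=\mathbb{B}^j(\mathbb{I}(\varphi))\cap\mathcal{H}$. A lineage is a finite $\mathcal{L}\subset\mathfrak{B}$ with $\mathcal{L}\subset\mathcal{B}^0\cup\mathrm{ch}(\mathcal{L})$; its hierarchical generator is $(\mathcal{B}^0\cup\mathrm{ch}(\mathcal{L}))\setminus\mathcal{L}$. For $\varphi\in\mathcal{H}$, $\mathrm{gap}_{\mathcal{H}}(\varphi)=\sup\{g\in\mathbb{Z}:\mathcal{O}(\varphi,-g,\mathcal{H})\neq\emptyset\}$. *)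

(* Defs.v *)
From HB Require Import structures.
From mathcomp Require Import all_boot all_order all_algebra.
Set Implicit Arguments. Unset Strict Implicit. Unset Printing Implicit Defensive.
Import Order.TTheory GRing.Theory Num.Theory.
Local Open Scope ring_scope.

(* A B-spline phi^l_i is represented by its (level, translation) pair (l, i),
   l : nat, i in Z^d.  Likewise a cell I^l_i is represented by (l, i).
   Both maps (l,i) |-> function / set are injective. *)
Definition idx (d : nat) := {ffun 'I_d -> int}.
Definition bspl (d : nat) := (nat * idx d)%type.
Definition cell (d : nat) := (nat * idx d)%type.

Definition bset (d : nat) := bspl d -> Prop.
Definition cset (d : nat) := cell d -> Prop.

Section Defs.
Variables (d n m : nat).
Definition s_ : int := (n.-1)%:Z.
Definition p_ : int := (m.-1)%:Z.

Definition B0 (phi : bspl d) : Prop :=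
  phi.1 = 0%N /\ forall t : 'I_d, - p_ <= phi.2 t /\ phi.2 t <= 0.

Definition bchild (phi psi : bspl d) : Prop :=
  psi.1 = phi.1.+1 /\
  forall t : 'I_d, n%:Z * phi.2 t <= psi.2 t /\
                   psi.2 t <= n%:Z * phi.2 t + s_ * m%:Z.

Definition chS (L : bset d) : bset d := fun psi => exists2 phi, L phi & bchild phi psi.

Definition finite_bset (L : bset d) : Prop :=
  exists l : seq (bspl d), forall phi, L phi -> phi \in l.

Definition lineage (L : bset d) : Prop :=
  finite_bset L /\ forall phi, L phi -> B0 phi \/ chS L phi.

Definition hgen (L : bset d) : bset d :=
  fun phi => (B0 phi \/ chS L phi) /\ ~ L phi.

Definition cchild (I J : cell d) : Prop :=
  J.1 = I.1.+1 /\
  forall t : 'I_d, n%:Z * I.2 t <= J.2 t /\ J.2 t <= n%:Z * I.2 t + s_.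

Fixpoint cdesc (k : nat) (J I : cell d) : Prop :=
  match k with
  | 0%N => I = J
  | k'.+1 => exists2 K, cchild J K & cdesc k' K I
  end.

Definition cellsOf (phi : bspl d) (I : cell d) : Prop :=
  I.1 = phi.1 /\ forall t : 'I_d, phi.2 t <= I.2 t /\ I.2 t <= phi.2 t + p_.

(* II^k(phi) = ch^k(II(phi)), k in Z; for k < 0, ch^k(S) = {J : S meets ch^{-k}(J)} *)
Definition cellsK (k : int) (phi : bspl d) (I : cell d) : Prop :=
  match k with
  | Posz k' => exists2 J, cellsOf phi J & cdesc k' J I
  | Negz k' => exists2 J, cellsOf phi J & cdesc k'.+1 I J
  end.

(* BB^k(I) = {phi : I in II^{-k}(phi)}, extended to sets by union;
   O(phi, j, H) = BB^j(II(phi)) \cap H *)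
Definition Ov (phi : bspl d) (j : int) (H : bset d) (psi : bspl d) : Prop :=
  H psi /\ exists2 I, cellsOf phi I & cellsK (- j) psi I.

Definition Onempty (phi : bspl d) (j : int) (H : bset d) : Prop :=
  exists psi, Ov phi j H psi.

(* is_gap H phi g : g = sup { g : O(phi,-g,H) <> empty }, the sup being attained
   (a sup of a set of integers which is a finite integer is a maximum). *)
Definition is_gap (H : bset d) (phi : bspl d) (g : int) : Prop :=
  Onempty phi (- g) H /\ forall g', Onempty phi (- g') H -> g' <= g.
End Defs.

(* Main.v *)
Require Import Defs.
From HB Require Import structures.
From mathcomp Require Import all_boot all_order all_algebra.
From mathcomp Require Import zify.
From Stdlib Require Import Classical.
Import Order.TTheory GRing.Theory Num.Theory.
Local Open Scope ring_scope.
Set Implicit Arguments. Unset Strict Implicit.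

Section Aux.
Variables (d n m : nat).
Hypothesis hn : (2 <= n)%N.
Hypothesis hm : (2 <= m)%N.

Lemma cdesc_trans x y (A B C : cell d) :
  cdesc n x A B -> cdesc n y B C -> cdesc n (x + y) A C.
Proof.
elim: x A => [|x IH] A /=; first by move=> ->.
by case=> K hK hKB hBC; exists K => //; apply: IH.
Qed.

Lemma cdesc_split x y (A C : cell d) :
  cdesc n (x + y) A C -> exists B, cdesc n x A B /\ cdesc n y B C.
Proof.
elim: x A => [|x IH] A /=; first by move=> h; exists A.
case=> K hK /IH [B [h1 h2]]; exists B; split => //; by exists K.
Qed.

Lemma cdesc_level k (A C : cell d) : cdesc n k A C -> C.1 = (A.1 + k)%N.
Proof.
elim: k A => [|k IH] A /=; first by move=> ->; rewrite addn0.
by case=> K [hK _] /IH ->; rewrite hK addSnnS.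
Qed.

Lemma parent_uniq (A A' K : cell d) : cchild n A K -> cchild n A' K -> A = A'.
Proof.
case: A => a1 a2; case: A' => b1 b2; case=> /= h1 h2 [/= h1' h2'].
have e1 : a1 = b1 by move: h1 h1'; lia.
congr pair => //; apply/ffunP => t.
have [x1 x2] := h2 t; have [y1 y2] := h2' t.
  move: x1 x2 y1 y2; rewrite /s_ => x1 x2 y1 y2; have := hn; clear -x1 x2 y1 y2.
move: x1 x2 y1 y2; move: (a2 t) (b2 t) (K.2 t) => u v w; nia.
Qed.

Lemma cdesc_uniq k (A A' C : cell d) : cdesc n k A C -> cdesc n k A' C -> A = A'.
Proof.
elim: k A A' => [|k IH] A A' /=; first by move=> -> ->.
case=> K hK hKC [K' hK' hK'C].
have eK := IH _ _ hKC hK'C; subst K'.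
exact: parent_uniq hK hK'.
Qed.

Lemma child_cells (chi psi : bspl d) (J : cell d) :
  bchild n m chi psi -> cellsOf m psi J ->
  exists J', cellsOf m chi J' /\ cchild n J' J.
Proof.
case=> hl hb [hJl hJb].
exists (chi.1, [ffun t => (J.2 t %/ n%:Z)%Z]); split; split => //=.
- move=> t; rewrite ffunE.
  have [b1 b2] := hb t; have [c1 c2] := hJb t.
  have e := divz_eq (J.2 t) n%:Z.
  have r0 : (0 <= (J.2 t %% n%:Z)%Z) by apply: modz_ge0; lia.
  have r1 : ((J.2 t %% n%:Z)%Z < `|n%:Z|) by apply: ltz_mod; lia.
  have nn : `|n%:Z| = n%:Z by [].
  rewrite nn in r1; move: b1 b2 c1 c2 e r0 r1; rewrite /s_ /p_.
  move: (J.2 t) (chi.2 t) (psi.2 t) (J.2 t %/ n%:Z)%Z (J.2 t %% n%:Z)%Z => u v w x y.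
  have := hn; have := hm; nia.
- by rewrite hJl hl.
- move=> t; rewrite ffunE.
  have e := divz_eq (J.2 t) n%:Z.
  have r0 : (0 <= (J.2 t %% n%:Z)%Z) by apply: modz_ge0; lia.
  have r1 : ((J.2 t %% n%:Z)%Z < `|n%:Z|) by apply: ltz_mod; lia.
  have nn : `|n%:Z| = n%:Z by [].
  rewrite nn in r1; move: e r0 r1; rewrite /s_.
  move: (J.2 t) (J.2 t %/ n%:Z)%Z (J.2 t %% n%:Z)%Z => u x y.
  have := hn; nia.
Qed.

Lemma cellsK_level g (psi : bspl d) (I : cell d) :
  cellsK n m g psi I -> (I.1)%:Z = (psi.1)%:Z + g.
Proof.
case: g => [a|a] [J [hJ _] hd]; have := cdesc_level hd.
- by move=> ->; rewrite hJ; lia.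
- move=> e; rewrite -hJ e NegzE; lia.
Qed.

Lemma cellsK_comp g j (psi chi : bspl d) (I : cell d) :
  cellsK n m g psi I ->
  (forall J, cellsOf m psi J -> exists J', cellsOf m chi J' /\ cdesc n j J' J) ->
  cellsK n m (g + j%:Z) chi I.
Proof.
case: g => [a|a] [J hJ hd] hanc; have [J' [hJ' hd']] := hanc J hJ.
- rewrite -PoszD /=; exists J' => //; rewrite addnC; exact: cdesc_trans hd' hd.
- case: (leqP a.+1 j) => hj.
  + have -> : Negz a + j%:Z = Posz (j - a.+1)%N by rewrite NegzE; lia.
    move: hd'; rewrite -(subnK hj) => /cdesc_split [B [h1 h2]].
    have eB := cdesc_uniq h2 hd; subst B.
    by exists J' => //; rewrite addnK.
  + have -> : Negz a + j%:Z = Negz (a - j)%N by rewrite !NegzE; lia.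
    move: hd; have -> : a.+1 = ((a - j).+1 + j)%N by lia.
    move=> /cdesc_split [B [h1 h2]].
    have eB := cdesc_uniq h2 hd'; subst B.
    by exists J'.
Qed.

Lemma ancestor (L Ls : bset d) (hLs : lineage n m Ls) N :
  forall psi : bspl d, psi.1 = N ->
  (B0 m psi \/ chS n m Ls psi) -> ~ L psi ->
  exists chi j, hgen n m L chi /\
   (forall J, cellsOf m psi J -> exists J', cellsOf m chi J' /\ cdesc n j J' J).
Proof.
elim: N => [|N IH] psi hN hps hnL.
- case: hps => [hB|[psi' _ [hl _]]]; last by rewrite hl in hN.
  exists psi, 0%N; split; first by split => //; left.
  by move=> J hJ; exists J.
- case: (classic (B0 m psi \/ chS n m L psi)) => hc.
    exists psi, 0%N; split; first by split.
    by move=> J hJ; exists J.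
  case: hps => [hB|[psi' hpsi' hch]]; first by case: hc; left.
  have hnL' : ~ L psi' by move=> h; apply: hc; right; exists psi'.
  have [hfin hlin] := hLs.
  have hN' : psi'.1 = N by case: hch => hl _; move: hN; rewrite hl => -[].
  have [chi [j [hchi hj]]] := IH psi' hN' (hlin _ hpsi') hnL'.
  exists chi, j.+1; split => // J hJ.
  have [J1 [hJ1 hc1]] := child_cells hch hJ.
  have [J2 [hJ2 hd2]] := hj _ hJ1.
  exists J2; split => //; rewrite -addn1; apply: cdesc_trans hd2 _.
  by exists J.
Qed.

Lemma int_max (P : int -> Prop) N : forall g0, P g0 ->
  (forall g, P g -> g <= g0 + N%:Z) -> exists g, P g /\ forall g', P g' -> g' <= g.
Proof.
elim: N => [|N IH] g0 h0 hb.
  by exists g0; split => // g' /hb; rewrite addr0.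
case: (classic (exists g, P g /\ g0 < g)) => [[g1 [h1 lt1]]|hno].
  apply: (IH g1 h1) => g /hb; lia.
exists g0; split => // g' hg'; case: (leP g' g0) => // lt.
by case: hno; exists g'.
Qed.

Lemma gap_exists (H : bset d) (phi : bspl d) : H phi -> exists g, is_gap n m H phi g.
Proof.
move=> hH.
suff [g [h1 h2]] : exists g, Onempty n m phi (- g) H /\ forall g', Onempty n m phi (- g') H -> g' <= g.
  by exists g; split.
apply: (@int_max (fun g => Onempty n m phi (- g) H) phi.1 0).
- exists phi; split => //; exists phi.
    by split => // t; rewrite /p_; lia.
  rewrite /= ?oppr0; exists phi => //; split => // t; rewrite /p_; lia.
- move=> g [psi [_ [I [hI _] hK]]]; move: hK; rewrite opprK => /cellsK_level.
  rewrite hI; lia.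
Qed.

End Aux.

Theorem lemma7p4 (d n m : nat) (hd : (1 <= d)%N) (hn : (2 <= n)%N) (hm : (2 <= m)%N)
  (L Ls : bset d) (hL : lineage n m L) (hLs : lineage n m Ls)
  (hsub : forall phi, L phi -> Ls phi) :
  (forall phi, hgen n m Ls phi ->
     exists g, is_gap n m (hgen n m Ls) phi g /\
       exists k : int, g <= k /\ Onempty n m phi (- k) (hgen n m L)) /\
  (forall phi, hgen n m Ls phi -> hgen n m L phi ->
     exists gs g, [/\ is_gap n m (hgen n m Ls) phi gs,
                      is_gap n m (hgen n m L) phi g & gs <= g]).
Proof.
have key : forall phi g, Onempty n m phi (- g) (hgen n m Ls) ->
    exists k : int, g <= k /\ Onempty n m phi (- k) (hgen n m L).
  move=> phi g [psi [[hps hnLs] [I hI hK]]].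
  move: hK; rewrite opprK => hK.
  have hnL : ~ L psi by move=> /hsub.
  have [chi [j [hchi hj]]] := ancestor hn hm hLs erefl hps hnL.
  exists (g + j%:Z); split; first lia.
  exists chi; split => //; exists I => //; rewrite opprK.
  have := cellsK_comp hn hm hK hj. exact.
split.
  move=> phi hphi; have [g hg] := gap_exists hn hm hphi.
  by exists g; split => //; apply: key; case: hg.
move=> phi h1 h2.
have [gs hgs] := gap_exists hn hm h1; have [g hg] := gap_exists hn hm h2.
exists gs, g; split => //.
have [k [hk hO]] := key _ _ hgs.1.
apply: le_trans hk _; exact: hg.2 _ hO.
Qed.
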